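(* Let $Q=\langle A_k,s_i:k<n,i<m\rangle$ (with $n$ minimal). Then there is an $\mathscr{L}_{\omega\omega}(Q)$-formula $\chi(x,y)$, with $x,y$ $d$-tuples of variables, such that for all $a,b\in\mathbb{N}^d$: $\mathbb{N}\models\chi(a,b)$ if and only if $a,b\in A_k$ for some $k<n$.
   Context: For $A\subseteq\mathbb{N}^d$ let $Q_A=\{X\subseteq\mathbb{N}^d:A\subseteq X\}$, $Q_A^{1}=Q_A$ and $Q_A^{-1}$ the complement of $Q_A$ in the power set of $\mathbb{N}^d$. The notation $Q=\langle A_k,s_i:k<n,i<m\rangle$ means: $\langle A_k:k<n\rangle$ is a partition of $\mathbb{N}^d$ for some $d<\omega$, $s_i\in\{1,-1\}^n$ for $i<m$, $Q=\bigcup_{i<m}\bigcap_{k<n}Q_{A_k}^{s_i(k)}$, and $n$ is minimal among all such representations of $Q$. $Q$ is a quantifier of type $\langle d\rangle$ on $\mathbb{N}$. $\mathscr{L}_{\omega\omega}(Q)$ is first-order logic extended by formulas $Qx\,\varphi(x,y)$ ($x$ a $d$-tuple of variables) with $\mathbb{N}\models Qx\,\varphi(x,b)$ iff $\{a\in\mathbb{N}^d:\mathbb{N}\models\varphi(a,b)\}\in Q$; formulas have no non-logical symbols besides $Q$. *)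

(* Defs.v *)
From mathcomp Require Import all_boot.
Set Implicit Arguments. Unset Strict Implicit. Unset Printing Implicit Defensive.

Definition point (d : nat) := 'I_d -> nat.
Definition pset (d : nat) := point d -> Prop.
Definition quant (d : nat) := pset d -> Prop.

(* Q_A = {X | A ⊆ X};  Q_A^1 = Q_A, Q_A^{-1} = complement. Sign 1 ~ true, -1 ~ false. *)
Definition QA d (A : pset d) : quant d := fun X => forall x, A x -> X x.
Definition QAs d (A : pset d) (s : bool) : quant d :=
  fun X => if s then QA A X else ~ QA A X.

Definition is_partition d n (A : 'I_n -> pset d) : Prop :=
  (forall k, exists x, A k x) /\
  (forall x, exists k, A k x) /\
  (forall x k l, A k x -> A l x -> k = l).

Definition represents d n (A : 'I_n -> pset d) m (s : 'I_m -> 'I_n -> bool)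
    (Q : quant d) : Prop :=
  is_partition A /\ forall X, Q X <-> exists i, forall k, QAs (A k) (s i k) X.

Definition presentation d n (A : 'I_n -> pset d) m (s : 'I_m -> 'I_n -> bool)
    (Q : quant d) : Prop :=
  represents A s Q /\
  forall n' (A' : 'I_n' -> pset d) m' (s' : 'I_m' -> 'I_n' -> bool),
    represents A' s' Q -> n <= n'.

Inductive form (d : nat) : Type :=
| FEq  : nat -> nat -> form d
| FNot : form d -> form d
| FAnd : form d -> form d -> form d
| FEx  : nat -> form d -> form d
| FQ   : (point d) -> form d -> form d.  (* Q x φ, x = (x_0..x_{d-1}) variable indices *)

Definition tuple_inj d (xs : point d) : bool :=
  [forall i : 'I_d, forall j : 'I_d, (xs i == xs j) ==> (i == j)].

Definition upd d (e : nat -> nat) (xs : point d) (a : point d) : nat -> nat :=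
  fun v => match [pick i | xs i == v] with Some i => a i | None => e v end.

Definition upd1 (e : nat -> nat) (x a : nat) : nat -> nat :=
  fun v => if v == x then a else e v.

(* Satisfaction in the structure N (pure equality + Q). A Q-quantifier block
   is only meaningful for pairwise distinct variables; otherwise it is false. *)
Fixpoint sat d (Q : quant d) (e : nat -> nat) (f : form d) : Prop :=
  match f with
  | FEq u v => e u = e v
  | FNot g => ~ sat Q e g
  | FAnd g h => sat Q e g /\ sat Q e h
  | FEx x g => exists a : nat, sat Q (upd1 e x a) g
  | FQ xs g => tuple_inj xs /\ Q (fun a => sat Q (upd e xs a) g)
  end.

Fixpoint fv d (f : form d) (v : nat) : bool :=
  match f with
  | FEq u w => (v == u) || (v == w)
  | FNot g => fv g v
  | FAnd g h => fv g v || fv h v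
  | FEx x g => (v != x) && fv g v
  | FQ xs g => fv g v && ~~ [exists i, xs i == v]
  end.

(* Main.v *)
Require Import Defs.
From mathcomp Require Import all_boot.
From Stdlib Require Import Classical ClassicalEpsilon FunctionalExtensionality Lia.
Set Implicit Arguments. Unset Strict Implicit. Unset Printing Implicit Defensive.

Lemma QAs_iff d (A : pset d) (b : bool) X : QAs A b X <-> (b <-> QA A X).
Proof. rewrite /QAs; case: b; split.
- move=> H; by split.
- by case=> H _; apply: H.
- move=> H; split=> // /H.
- move=> [_ H] /H //.
Qed.

Lemma Q_pat d n (A : 'I_n -> pset d) m (s : 'I_m -> 'I_n -> bool) Q X Y :
  represents A s Q -> (forall k, QA (A k) X <-> QA (A k) Y) -> Q X -> Q Y.
Proof.
case=> _ HQ H /HQ [i Hi]; apply/HQ; exists i => k.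
have := Hi k; rewrite !QAs_iff H //.
Qed.

Lemma Q_ext d n (A : 'I_n -> pset d) m (s : 'I_m -> 'I_n -> bool) Q (X Y : pset d) :
  represents A s Q -> (forall w, X w <-> Y w) -> Q X -> Q Y.
Proof.
move=> HR H; apply: (Q_pat HR) => k; split=> Hk x /Hk; apply H.
Qed.

Definition Xp d n (A : 'I_n -> pset d) (p : 'I_n -> bool) : pset d :=
  fun x => exists k, p k /\ A k x.

Lemma QA_Xp d n (A : 'I_n -> pset d) p k :
  is_partition A -> QA (A k) (Xp A p) <-> p k.
Proof.
case=> [Hne [_ Hdis]]; split.
- case: (Hne k) => x Hx H; case: (H x Hx) => k' [Hp Hk'].
  by rewrite (Hdis x k k' Hx Hk').
- move=> Hp x Hx; by exists k.
Qed.

Lemma Q_Xp_s d n (A : 'I_n -> pset d) m (s : 'I_m -> 'I_n -> bool) Q i :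
  represents A s Q -> Q (Xp A (s i)).
Proof.
move=> [HP HQ]; apply/HQ; exists i => k; rewrite QAs_iff QA_Xp //.
Qed.

Definition Xac d r (a : point d) (c : 'I_r -> point d) : pset d :=
  fun w => ~ (w = a \/ exists j, w = c j).

Lemma QA_Xac d r (B : pset d) (a : point d) (c : 'I_r -> point d) :
  QA B (Xac a c) <-> ~ (B a \/ exists j, B (c j)).
Proof.
split.
- move=> H [Ha|[j Hj]]; [apply: (H _ Ha); by left | apply: (H _ Hj); right; by exists j].
- move=> H x Hx [E|[j E]]; apply: H; [left|right; exists j]; by rewrite -E.
Qed.

Lemma notor_b (P : Prop) (b c : bool) : (P <-> b) -> (~ (P \/ c) <-> ~~ (b || c)).
Proof. move=> H; rewrite H; clear H; case: b; case: c; split=> //= X; try by case: X; auto.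
- by case.
Qed.

Lemma QiffXp d n (A : 'I_n -> pset d) m (s : 'I_m -> 'I_n -> bool) Q (Y : pset d) (pi : 'I_n -> bool) :
  represents A s Q -> (forall k, QA (A k) Y <-> pi k) -> (Q Y <-> Q (Xp A pi)).
Proof.
move=> HR H; have HP := HR.1; split; apply: (Q_pat HR) => k; rewrite H QA_Xp //.
Qed.

Definition pat n (p : 'I_n -> bool) (k l : 'I_n) (x y : bool) : 'I_n -> bool :=
  fun k' => if k' == k then x else if k' == l then y else p k'.

Lemma twin d n (A : 'I_n -> pset d) m (s : 'I_m -> 'I_n -> bool) (Q : quant d) (k l : 'I_n) (a b : point d) :
  represents A s Q -> k != l -> A k a -> A l b ->
  (forall c : 'I_n -> point d, Q (Xac a c) <-> Q (Xac b c)) ->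
  forall p q : 'I_n -> bool, (forall k', k' != k -> k' != l -> p k' = q k') ->
    p k && p l = q k && q l -> Q (Xp A p) -> Q (Xp A q).
Proof.
move=> HR kl Ha Hb Hchi p q Hout Hand.
have [Hne [Hcov Hdis]] := HR.1.
have lk : l != k by rewrite eq_sym.
pose rep j := proj1_sig (constructive_indefinite_description _ (Hne j)).
have Hrep j : A j (rep j) := proj2_sig (constructive_indefinite_description _ (Hne j)).
have memA k' x k0 : A k0 x -> (A k' x <-> k' == k0).
  by move=> H0; split=> [H1|/eqP->//]; apply/eqP; apply: Hdis H1 H0.
have key (u : 'I_n -> bool) u0 : u u0 -> forall k',
    (exists j, A k' (rep (if u j then j else u0))) <-> u k'.
  move=> Hu0 k'; split.
  - case=> j; case Euj: (u j); rewrite (memA _ _ _ (Hrep _)) => /eqP->//.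
  - by move=> Hk; exists k'; rewrite Hk.
have Hcase (c : 'I_n -> point d) x y x' y' :
    (forall k', QA (A k') (Xac a c) <-> pat p k l x y k') ->
    (forall k', QA (A k') (Xac b c) <-> pat p k l x' y' k') ->
    (Q (Xp A (pat p k l x y)) <-> Q (Xp A (pat p k l x' y'))).
  move=> E1 E2; rewrite -(QiffXp HR E1) -(QiffXp HR E2); exact: Hchi.
have S1 : Q (Xp A (pat p k l false true)) <-> Q (Xp A (pat p k l false false)).
  pose u k' := (k' == k) || ((k' != l) && ~~ p k').
  have uk : u k by rewrite /u eqxx.
  apply: (Hcase (fun j => rep (if u j then j else k))) => k';
    rewrite QA_Xac (key _ _ uk);
    [rewrite (notor_b _ (memA k' a k Ha))|rewrite (notor_b _ (memA k' b l Hb))];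
    rewrite /u /pat; (have [->|nk] := eqVneq k' k);
    (try have [->|nl] := eqVneq k' l); rewrite ?eqxx ?(negbTE kl) ?(negbTE lk) ?(negbTE nk) ?(negbTE nl) /=;
    try (by []); try (by case: (p k')).
have S2 : Q (Xp A (pat p k l true false)) <-> Q (Xp A (pat p k l false false)).
  pose u k' := (k' == l) || ((k' != k) && ~~ p k').
  have ul : u l by rewrite /u eqxx.
  symmetry.
  apply: (Hcase (fun j => rep (if u j then j else l))) => k';
    rewrite QA_Xac (key _ _ ul);
    [rewrite (notor_b _ (memA k' a k Ha))|rewrite (notor_b _ (memA k' b l Hb))];
    rewrite /u /pat; (have [->|nk] := eqVneq k' k);
    (try have [->|nl] := eqVneq k' l); rewrite ?eqxx ?(negbTE kl) ?(negbTE lk) ?(negbTE nk) ?(negbTE nl) /=;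
    try (by []); try (by case: (p k')).
have S x y : ~~ (x && y) -> Q (Xp A (pat p k l x y)) <-> Q (Xp A (pat p k l false false)).
  by case: x; case: y => //= _; first [exact: S1|exact: S2|done].
have Pp : Q (Xp A p) <-> Q (Xp A (pat p k l (p k) (p l))).
  apply: QiffXp HR _ => k'; rewrite QA_Xp // /pat.
  have [->|nk] := eqVneq k' k => //; have [->|nl] := eqVneq k' l => //.
have Pq : Q (Xp A q) <-> Q (Xp A (pat p k l (q k) (q l))).
  apply: QiffXp HR _ => k'; rewrite QA_Xp // /pat.
  have [->|nk] := eqVneq k' k => //; have [->|nl] := eqVneq k' l => //.
  by rewrite (Hout _ nk nl).
rewrite Pp Pq.
case Hpkl: (p k && p l).
- move: Hand; rewrite Hpkl => /esym/andP [-> ->]; by move: Hpkl => /andP [-> ->].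
- rewrite S; last by rewrite Hpkl.
  by rewrite S // -Hand Hpkl.
Qed.

Lemma merge d n (A : 'I_n -> pset d) m (s : 'I_m -> 'I_n -> bool) (Q : quant d)
  (k l : 'I_n) :
  represents A s Q -> k != l ->
  (forall p q : 'I_n -> bool, (forall k', k' != k -> k' != l -> p k' = q k') ->
    p k && p l = q k && q l -> Q (Xp A p) -> Q (Xp A q)) ->
  exists n' (A' : 'I_n' -> pset d) m' (s' : 'I_m' -> 'I_n' -> bool),
    represents A' s' Q /\ n' < n.
Proof.
case: n A s k l => [|n] A s k l; first by case: k.
move=> HR kl Htw.
have [Hne [Hcov Hdis]] := HR.1.
pose B (j : 'I_n) : pset d := fun x => A (lift l j) x \/ (lift l j = k /\ A l x).
pose g i : {ffun 'I_n -> bool} := [ffun j => s i (lift l j) && ((lift l j != k) || s i l)].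
pose F := [set g i | i : 'I_m].
exists n, B, #|F|, (fun (i' : 'I_#|F|) j => (enum_val i' : {ffun 'I_n -> bool}) j); split; last exact: ltnSn.
have QAB j X : QA (B j) X <-> QA (A (lift l j)) X /\ (lift l j = k -> QA (A l) X).
  split.
  - move=> H; split=> [x Hx|E x Hx]; apply: H; [by left|by right].
  - by case=> H1 H2 x [Hx|[E Hx]]; [apply: H1|apply: H2].
split; first split; [|split|].
- move=> j; case: (Hne (lift l j)) => x Hx; exists x; by left.
- move=> x; case: (Hcov x) => p Hp; case: (unliftP l p) => [j Ej|Ep].
  + by exists j; left; rewrite -Ej.
  + case: (unliftP l k) => [j Ej|Ek]; last by rewrite Ek eqxx in kl.
    by exists j; right; split; [rewrite -Ej|rewrite -Ep].
- move=> x j1 j2 [H1|[E1 H1]] [H2|[E2 H2]].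
  + by apply: (lift_inj (h:=l)); apply: Hdis H1 H2.
  + by have := neq_lift l j1; rewrite (Hdis _ _ _ H1 H2) eqxx.
  + by have := neq_lift l j2; rewrite (Hdis _ _ _ H2 H1) eqxx.
  + by apply: (lift_inj (h:=l)); rewrite E1 E2.
- move=> X; split.
  + move=> /HR.2 [i Hi].
    have Fi : g i \in F by apply: imset_f.
    exists (enum_rank_in Fi (g i)) => j; rewrite enum_rankK_in // QAs_iff ffunE QAB.
    have Hk := Hi k; have Hl := Hi l; have Hj := Hi (lift l j).
    rewrite QAs_iff in Hk; rewrite QAs_iff in Hl; rewrite QAs_iff in Hj.
    have [E|nE] := eqVneq (lift l j) k.
    * rewrite E /=; rewrite E in Hj; rewrite -Hk -Hl; split; first by case/andP=> -> ->.
      by case=> -> /(_ erefl) ->.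
    * rewrite /= andbT -Hj; split; first by move=> H; split=> // E; rewrite E eqxx in nE.
      by case.
  + case=> i' Hi'.
    have := enum_valP i'; case/imsetP => i _ Ei.
    pose pi k' := if excluded_middle_informative (QA (A k') X) then true else false.
    have Hpi k' : QA (A k') X <-> pi k'.
      rewrite /pi; case: excluded_middle_informative => //.
    have HX := @QiffXp _ _ A _ s Q X pi HR Hpi. apply HX.
    refine (Htw (s i) pi _ _ (Q_Xp_s i HR)).
    * move=> k' nk nl; case: (unliftP l k') => [j Ej|Ej]; last by rewrite Ej eqxx in nl.
      have := Hi' j; rewrite Ei QAs_iff ffunE QAB -Ej nk /= andbT => H.
      apply/idP/idP => [/H [/Hpi]//|/Hpi H1]; apply/H; split=> // E; by rewrite E eqxx in nk.
    * case: (unliftP l k) => [j Ej|Ej]; last by rewrite Ej eqxx in kl.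
      have := Hi' j; rewrite Ei QAs_iff ffunE QAB -Ej eqxx /= => H.
      apply/idP/idP => [/H [/Hpi -> /(_ erefl) /Hpi ->]//|/andP [/Hpi H1 /Hpi H2]].
      by apply/H; split.
Qed.

Definition Ftrue d : form d := FEx 0 (FEq d 0 0).
Definition FOr d (g h : form d) := FNot (FAnd (FNot g) (FNot h)).
Definition FIff d (g h : form d) :=
  FAnd (FNot (FAnd g (FNot h))) (FNot (FAnd h (FNot g))).
Definition FAll d v (g : form d) := FNot (FEx v (FNot g)).
Definition eqpt d (us ws : point d) : form d :=
  foldr (fun i acc => FAnd (FEq d (us i) (ws i)) acc) (Ftrue d) (enum 'I_d).
Definition body d n (zs us : point d) (cv : 'I_n -> point d) : form d :=
  FNot (foldr (fun j acc => FOr (eqpt zs (cv j)) acc) (eqpt zs us) (enum 'I_n)).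
Definition ovr (e f : nat -> nat) (vs : seq nat) := fun v => if v \in vs then f v else e v.


Lemma sat_FOr d (Q : quant d) e g h : sat Q e (FOr g h) <-> sat Q e g \/ sat Q e h.
Proof. rewrite /=; tauto. Qed.

Lemma sat_FIff d (Q : quant d) e g h : sat Q e (FIff g h) <-> (sat Q e g <-> sat Q e h).
Proof. rewrite /=; tauto. Qed.

Lemma sat_FAll d (Q : quant d) e v g : sat Q e (FAll v g) <-> forall a, sat Q (upd1 e v a) g.
Proof.
rewrite /=; split.
- move=> H a; apply: NNPP => Hn; apply: H; by exists a.
- by move=> H [a Ha]; apply: Ha.
Qed.

Lemma sat_eqpt d (Q : quant d) e us ws : sat Q e (eqpt us ws) <-> forall i, e (us i) = e (ws i).
Proof.
rewrite /eqpt.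
suff H : forall r : seq 'I_d, sat Q e (foldr (fun i acc => FAnd (FEq d (us i) (ws i)) acc) (Ftrue d) r)
   <-> forall i, i \in r -> e (us i) = e (ws i).
  by rewrite H; split=> H' i; [apply: H'; rewrite mem_enum|move=> _; apply: H'].
elim=> [|i r IH] /=.
- by split=> // _; exists 0.
- rewrite IH; split.
  + by case=> H1 H2 j; rewrite in_cons => /orP [/eqP ->|/H2].
  + move=> H; split; first by apply: H; rewrite mem_head.
    by move=> j Hj; apply: H; rewrite in_cons Hj orbT.
Qed.

Lemma sat_body d n (Q : quant d) e zs us (cv : 'I_n -> point d) :
  sat Q e (body zs us cv) <->
  ~ ((forall i, e (zs i) = e (us i)) \/ exists j, forall i, e (zs i) = e (cv j i)).
Proof.
rewrite /body.
suff H : forall r : seq 'I_n,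
  sat Q e (foldr (fun j acc => FOr (eqpt zs (cv j)) acc) (eqpt zs us) r) <->
  ((forall i, e (zs i) = e (us i)) \/ exists2 j, j \in r & forall i, e (zs i) = e (cv j i)).
  rewrite /= H; split=> H1 H2; apply: H1; case: H2 => [H2|H2]; [by left| |by left|].
  - by case: H2 => j Hj; right; exists j; rewrite ?mem_enum.
  - by case: H2 => j _ Hj; right; exists j.
elim=> [|j r IH].
- rewrite /= sat_eqpt; split; [by left|by case=> // [[j]]].
- rewrite [foldr _ _ (_ :: _)]/= sat_FOr IH sat_eqpt; split.
  + case=> [H|[H|[j' Hj' H]]]; [right; exists j; rewrite ?mem_head //|by left|].
    by right; exists j'; rewrite // in_cons Hj' orbT.
  + case=> [H|[j' Hj' H]]; [by right; left|].
    move: Hj'; rewrite in_cons => /orP [/eqP E|Hj']; first by left; rewrite -E.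
    by right; right; exists j'.
Qed.

Lemma sat_alls d (Q : quant d) e g vs :
  sat Q e (foldr (@FAll d) g vs) <-> forall f, sat Q (ovr e f vs) g.
Proof.
elim: vs e => [|v vs IH] e.
- have E f : ovr e f [::] = e by apply: functional_extensionality.
  by split=> [H f|H]; [rewrite E|have := H e; rewrite E].
- rewrite [foldr _ _ (_ :: _)]/= sat_FAll; split.
  + move=> H f; have := (proj1 (IH _) (H (f v)) f).
    suff -> : ovr (upd1 e v (f v)) f vs = ovr e f (v :: vs) by [].
    apply: functional_extensionality => w; rewrite /ovr /upd1 in_cons.
    by case: (w \in vs); case: eqP => [->|]; rewrite ?orbT ?orbF.
  + move=> H a; apply/IH => f.
    have := H (fun w => if w \in vs then f w else a).
    suff -> : ovr e (fun w => if w \in vs then f w else a) (v :: vs) = ovr (upd1 e v a) f vs by [].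
    apply: functional_extensionality => w; rewrite /ovr /upd1 in_cons.
    by case: (w \in vs); case: eqP => [->|]; rewrite ?orbT ?orbF.
Qed.

Lemma upd_in d e (xs a : point d) i : tuple_inj xs -> upd e xs a (xs i) = a i.
Proof.
move=> /forallP Hinj; rewrite /upd; case: pickP => [j /eqP Hj|/(_ i)]; last by rewrite eqxx.
by have := Hinj j => /forallP /(_ i) /implyP /(_ (introT eqP Hj)) /eqP ->.
Qed.

Lemma upd_out d e (xs a : point d) v : (forall i, xs i != v) -> upd e xs a v = e v.
Proof.
by move=> H; rewrite /upd; case: pickP => // j; rewrite (negbTE (H j)).
Qed.

Lemma fv_eqpt d (us ws : point d) v : fv (eqpt us ws) v -> exists i, v = us i \/ v = ws i.
Proof.
rewrite /eqpt; elim: (enum 'I_d) => [|i r IH] /=.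
- by rewrite orbb; case/andP=> /negbTE ->.
- case/orP; [case/orP=> /eqP ->; exists i; auto|exact: IH].
Qed.

Lemma fv_body d n zs us (cv : 'I_n -> point d) v : fv (body zs us cv) v ->
  exists i, v = zs i \/ v = us i \/ exists j, v = cv j i.
Proof.
rewrite /body /=; elim: (enum 'I_n) => [|j r IH] /=.
- by case/fv_eqpt => i [->|->]; exists i; auto.
- case/orP; last exact: IH.
  by case/fv_eqpt => i [->|->]; exists i; eauto.
Qed.

Lemma fv_alls d (g : form d) vs v : fv (foldr (@FAll d) g vs) v -> v \notin vs /\ fv g v.
Proof.
elim: vs => [|w vs IH] //=.
case/andP=> nw /IH [H1 H2]; split=> //; by rewrite in_cons negb_or nw.
Qed.

Definition xs0 d : point d := fun i => i.
Definition ys0 d : point d := fun i => d + i.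
Definition zs0 d : point d := fun i => d + d + i.
Definition cv0 d n : 'I_n -> point d := fun j i => d + d + d + (j * d + i).
Arguments xs0 : clear implicits.
Arguments ys0 : clear implicits.
Arguments zs0 : clear implicits.
Arguments cv0 : clear implicits.
Definition vs0 d n : seq nat := [seq cv0 d n p.1 p.2 | p <- enum {: 'I_n * 'I_d}].
Definition chi0 d n : form d :=
  foldr (@FAll d) (FIff (FQ (zs0 d) (body (zs0 d) (xs0 d) (cv0 d n)))
                        (FQ (zs0 d) (body (zs0 d) (ys0 d) (cv0 d n)))) (vs0 d n).

Lemma fv_FIff d (g h : form d) v : fv (FIff g h) v -> fv g v \/ fv h v.
Proof. by rewrite /= => /orP [/orP [H|H]|/orP [H|H]]; auto. Qed.

Lemma cv0_inj d n j i j' i' : cv0 d n j i = cv0 d n j' i' -> j = j' /\ i = i'.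
Proof.
rewrite /cv0 => /addnI E.
have Hi := ltn_ord i; have Hi' := ltn_ord i'.
have d0 : 0 < d by apply: leq_ltn_trans Hi.
have E1 := congr1 (modn^~ d) E; rewrite /= !modnMDl !modn_small // in E1.
have E2 := congr1 (divn^~ d) E; rewrite /= !divnMDl // !divn_small // !addn0 in E2.
by split; apply: val_inj.
Qed.

Lemma in_vs0 d n j i : cv0 d n j i \in vs0 d n.
Proof. by apply/mapP; exists (j, i); rewrite ?mem_enum. Qed.

Lemma notin_vs0 d n v : v < d + d + d -> v \notin vs0 d n.
Proof.
move=> Hv; apply/mapP => [[p _ E]]; move: Hv; rewrite E /cv0.
move=> /ltP; rewrite -!plusE -!multE; lia.
Qed.

Lemma inj_lin d c : tuple_inj (fun i : 'I_d => c + i).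
Proof.
apply/forallP=> i; apply/forallP=> j; apply/implyP=> /eqP /addnI H; apply/eqP; exact: val_inj.
Qed.

Lemma sem_chi d n (Q : quant d) (A : 'I_n -> pset d) m (s : 'I_m -> 'I_n -> bool) e a b :
  represents A s Q ->
  sat Q (upd (upd e (xs0 d) a) (ys0 d) b) (chi0 d n) <->
  forall c : 'I_n -> point d, Q (Xac a c) <-> Q (Xac b c).
Proof.
move=> HR.
set E0 := upd (upd e (xs0 d) a) (ys0 d) b.
have zinj : tuple_inj (zs0 d) by apply: (inj_lin d (d + d)).
have xinj : tuple_inj (xs0 d) by apply: (inj_lin d 0).
have yinj : tuple_inj (ys0 d) by apply: (inj_lin d d).
pose cf (f : nat -> nat) : 'I_n -> point d := fun j i => f (cv0 d n j i).
have Hbody f (us : point d) (u : point d) :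
  (forall i, ovr E0 f (vs0 d n) (us i) = u i) -> (forall i, us i < d + d) ->
  forall w, sat Q (upd (ovr E0 f (vs0 d n)) (zs0 d) w) (body (zs0 d) us (cv0 d n)) <->
            Xac u (cf f) w.
  move=> Hu Hlt w; rewrite sat_body /Xac.
  have Ez i : upd (ovr E0 f (vs0 d n)) (zs0 d) w (zs0 d i) = w i by rewrite upd_in.
  have Eu i : upd (ovr E0 f (vs0 d n)) (zs0 d) w (us i) = u i.
    rewrite upd_out ?Hu // => i'; apply/eqP => E; have := Hlt i; rewrite -E /zs0.
    by move=> /ltP; rewrite -!plusE; lia.
  have Ec j i : upd (ovr E0 f (vs0 d n)) (zs0 d) w (cv0 d n j i) = f (cv0 d n j i).
    rewrite upd_out; first by rewrite /ovr in_vs0.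
    move=> i'; apply/eqP; rewrite /zs0 /cv0 => /eqP; have := ltn_ord i'.
    move=> /ltP H /eqP; rewrite -!plusE -!multE; lia.
  split=> H1 H2; apply: H1; case: H2 => [H2|[j H2]].
  - by left=> i; rewrite Ez Eu H2.
  - by right; exists j => i; rewrite Ez Ec H2.
  - by left; apply: functional_extensionality => i; rewrite -Ez H2 Eu.
  - by right; exists j; apply: functional_extensionality => i; rewrite -(Ez i) H2 Ec.
have Hstep f : sat Q (ovr E0 f (vs0 d n)) (FIff (FQ (zs0 d) (body (zs0 d) (xs0 d) (cv0 d n)))
                        (FQ (zs0 d) (body (zs0 d) (ys0 d) (cv0 d n)))) <->
               (Q (Xac a (cf f)) <-> Q (Xac b (cf f))).
  have Hx := Hbody f (xs0 d) a.
  have Hy := Hbody f (ys0 d) b.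
  have Hx' : forall w, sat Q (upd (ovr E0 f (vs0 d n)) (zs0 d) w) (body (zs0 d) (xs0 d) (cv0 d n)) <-> Xac a (cf f) w.
    apply: Hx => i.
    - have Hn : xs0 d i \notin vs0 d n.
        by apply: notin_vs0; rewrite /xs0; apply: (leq_trans (ltn_ord i)); rewrite -addnA leq_addr.
      rewrite /ovr (negbTE Hn) /E0.
      rewrite upd_out ?upd_in // => i'; apply/eqP; rewrite /xs0 /ys0 => E.
      have := ltn_ord i; rewrite -E => /ltP; rewrite -!plusE; lia.
    - by rewrite /xs0; apply: (leq_trans (ltn_ord i)); rewrite leq_addr.
  have Hy' : forall w, sat Q (upd (ovr E0 f (vs0 d n)) (zs0 d) w) (body (zs0 d) (ys0 d) (cv0 d n)) <-> Xac b (cf f) w.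
    apply: Hy => i.
    - have Hn : ys0 d i \notin vs0 d n.
        by apply: notin_vs0; rewrite /ys0 -addnA ltn_add2l; apply: (leq_trans (ltn_ord i)); rewrite leq_addr.
      by rewrite /ovr (negbTE Hn) /E0 upd_in.
    - by rewrite /ys0 ltn_add2l.
  rewrite sat_FIff /=; split.
  - move=> H; split=> Hq.
    + have [_ H2] := proj1 H (conj zinj (Q_ext HR (fun w => iff_sym (Hx' w)) Hq)).
      exact: Q_ext HR Hy' H2.
    + have [_ H2] := proj2 H (conj zinj (Q_ext HR (fun w => iff_sym (Hy' w)) Hq)).
      exact: Q_ext HR Hx' H2.
  - move=> H; split=> [[_ Hq]|[_ Hq]]; split=> //.
    + exact: Q_ext HR (fun w => iff_sym (Hy' w)) (proj1 H (Q_ext HR Hx' Hq)).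
    + exact: Q_ext HR (fun w => iff_sym (Hx' w)) (proj2 H (Q_ext HR Hy' Hq)).
rewrite /chi0 sat_alls; split.
- move=> H c.
  pose f v := if [pick p : 'I_n * 'I_d | cv0 d n p.1 p.2 == v] is Some p then c p.1 p.2 else 0.
  have -> : c = cf f.
    apply: functional_extensionality => j; apply: functional_extensionality => i.
    rewrite /cf /f; case: pickP => [[j' i'] /eqP /cv0_inj [/= -> ->] //|/(_ (j, i))].
    by rewrite eqxx.
  exact/Hstep/H.
- by move=> H f; apply/Hstep/H.
Qed.

Theorem lemma19 (d n m : nat) (A : 'I_n -> pset d) (s : 'I_m -> 'I_n -> bool)
    (Q : quant d) :
  presentation A s Q ->
  exists (chi : form d) (xs ys : point d),
    [/\ tuple_inj xs, tuple_inj ys,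
        (forall i j, xs i <> ys j),
        (forall v, fv chi v -> exists i, v = xs i \/ v = ys i) &
        forall (e : nat -> nat) (a b : point d),
          sat Q (upd (upd e xs a) ys b) chi <-> exists k, A k a /\ A k b].
Proof.
move=> [HR Hmin].
have [Hne [Hcov Hdis]] := HR.1.
exists (chi0 d n), (xs0 d), (ys0 d); split.
- exact: (inj_lin d 0).
- exact: (inj_lin d d).
- move=> i j; rewrite /xs0 /ys0 => E; have := ltn_ord i; rewrite E => /ltP; rewrite -!plusE; lia.
- move=> v /fv_alls [nv /fv_FIff H].
  have H' : fv (body (zs0 d) (xs0 d) (cv0 d n)) v && ~~ [exists i, zs0 d i == v] \/
            fv (body (zs0 d) (ys0 d) (cv0 d n)) v && ~~ [exists i, zs0 d i == v] by [].
  case: H' => /andP [/fv_body [i [Hz|[Hu|[j Hc]]]] nz].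
  + by case/negP: nz; apply/existsP; exists i; rewrite Hz.
  + by exists i; left.
  + by move: nv; rewrite Hc in_vs0.
  + by case/negP: nz; apply/existsP; exists i; rewrite Hz.
  + by exists i; right.
  + by move: nv; rewrite Hc in_vs0.
- move=> e a b; rewrite (sem_chi _ _ _ HR); split.
  + move=> Hchi.
    case: (Hcov a) => k Ha; case: (Hcov b) => l Hb.
    have [E|kl] := eqVneq k l; first by exists k; rewrite -E in Hb.
    have Htw := twin HR kl Ha Hb Hchi.
    case: (merge HR kl Htw) => n' [A' [m' [s' [HR' lt]]]].
    by have := Hmin _ _ _ _ HR'; rewrite leqNgt lt.
  + case=> k [Ha Hb] c.
    have Hab k' : A k' a <-> A k' b.
      by split=> H; [rewrite (Hdis _ _ _ H Ha)|rewrite (Hdis _ _ _ H Hb)].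
    by split; apply: (Q_pat HR) => k'; rewrite !QA_Xac Hab.
Qed.
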